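(* Let $C$ be a unital composition algebra over a field $F$ of characteristic zero. Then $\mathrm{rb}(C)=1$ if $C$ is a division algebra or $\dim C\le2$, and $\mathrm{rb}(C)=3$ if $C$ is split and $\dim C\in\{4,8\}$.
   Context: An algebra $A$ over $F$ ($\mathrm{char}\,F\ne2$) is a composition algebra if there is a nondegenerate quadratic form $n$ on $A$ with $n(xy)=n(x)n(y)$ for all $x,y$; a unital one has dimension 1, 2, 4 or 8, and it is split if $n(x)=0$ for some nonzero $x$, otherwise it is a division algebra. A linear operator $R$ on $A$ is a Rota–Baxter operator of weight $0$ if $R(x)R(y)=R(R(x)y+xR(y))$ for all $x,y$. The RB-index $\mathrm{rb}(A)$ is the least $n\in\mathbb N$ such that $R^n=0$ for every Rota–Baxter operator $R$ of weight zero on $A$. *)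

(* Defs.v *)
From HB Require Import structures.
From mathcomp Require Import all_boot all_order all_algebra.
Set Implicit Arguments. Unset Strict Implicit. Unset Printing Implicit Defensive.
Import GRing.Theory.
Local Open Scope ring_scope.

Section CompositionAlgebra.
Variables (F : fieldType) (V : vectType F).

Definition bilinear_mul (mul : V -> V -> V) : Prop :=
  (forall (a : F) (x y z : V), mul (a *: x + y) z = a *: mul x z + mul y z) /\
  (forall (a : F) (x y z : V), mul z (a *: x + y) = a *: mul z x + mul z y).

Definition polar (n : V -> F) (x y : V) : F := n (x + y) - n x - n y.

Definition quadratic_form (n : V -> F) : Prop :=
  (forall (a : F) (x : V), n (a *: x) = a ^+ 2 * n x) /\
  (forall (a : F) (x y z : V),
      polar n (a *: x + y) z = a * polar n x z + polar n y z).

Definition nondegenerate (n : V -> F) : Prop :=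
  forall x : V, (forall y : V, polar n x y = 0) -> x = 0.

Definition unital_composition_algebra (mul : V -> V -> V) (e : V) (n : V -> F)
  : Prop :=
  e != 0 /\
  [/\ bilinear_mul mul,
      (forall x, mul e x = x /\ mul x e = x),
      quadratic_form n,
      nondegenerate n &
      (forall x y, n (mul x y) = n x * n y)].

Definition split_norm (n : V -> F) : Prop := exists2 x : V, x != 0 & n x = 0.

Definition linear_op (R : V -> V) : Prop :=
  forall (a : F) (x y : V), R (a *: x + y) = a *: R x + R y.

Definition rota_baxter0 (mul : V -> V -> V) (R : V -> V) : Prop :=
  linear_op R /\
  forall x y, mul (R x) (R y) = R (mul (R x) y + mul x (R y)).

Definition nilpotent_of_index_le (R : V -> V) (k : nat) : Prop :=
  forall x, iter k R x = 0.

Definition rb_index (mul : V -> V -> V) (k : nat) : Prop :=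
  (forall R, rota_baxter0 mul R -> nilpotent_of_index_le R k) /\
  (forall m : nat, (forall R, rota_baxter0 mul R -> nilpotent_of_index_le R m)
     -> (k <= m)%N).

End CompositionAlgebra.

(* Main.v *)
Require Import Defs.
From HB Require Import structures.
From mathcomp Require Import all_boot all_order all_algebra.
From mathcomp Require Import ring.
From Stdlib Require Import Classical.
Set Implicit Arguments. Unset Strict Implicit. Unset Printing Implicit Defensive.
Import GRing.Theory.
Local Open Scope ring_scope.

Section Lin.
Variables (F : fieldType) (V : lmodType F) (W : lmodType F) (f : V -> W).
Hypothesis hf : forall a x y, f (a *: x + y) = a *: f x + f y.
Lemma lf0 : f 0 = 0.
Proof. have h := hf 1 0 0; rewrite !scale1r !addr0 in h; apply: (addrI (f 0)); by rewrite addr0 -h. Qed.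
Lemma lfD x y : f (x + y) = f x + f y.
Proof. by rewrite -{1}[x]scale1r hf scale1r. Qed.
Lemma lfZ a x : f (a *: x) = a *: f x.
Proof. by rewrite -[a *: x]addr0 hf lf0 addr0. Qed.
Lemma lfN x : f (- x) = - f x.
Proof. by rewrite -scaleN1r lfZ scaleN1r. Qed.
Lemma lfB x y : f (x - y) = f x - f y.
Proof. by rewrite lfD lfN. Qed.
End Lin.

Section LinS.
Variables (F : fieldType) (V : lmodType F) (f : V -> F).
Hypothesis hf : forall a x y, f (a *: x + y) = a * f x + f y.
Lemma sf0 : f 0 = 0.
Proof. have h := hf 1 0 0; rewrite scale1r !addr0 mul1r in h; apply: (addrI (f 0)); by rewrite addr0 -h. Qed.
Lemma sfD x y : f (x + y) = f x + f y.
Proof. by rewrite -{1}[x]scale1r hf mul1r. Qed.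
Lemma sfZ a x : f (a *: x) = a * f x.
Proof. by rewrite -[a *: x]addr0 hf sf0 addr0. Qed.
Lemma sfN x : f (- x) = - f x.
Proof. by rewrite -scaleN1r sfZ mulN1r. Qed.
Lemma sfB x y : f (x - y) = f x - f y.
Proof. by rewrite sfD sfN. Qed.
End LinS.

Lemma span2 (F : fieldType) (V : vectType F) (e u : V) : (\dim {:V} <= 2)%N -> e != 0 ->
  (exists l, u = l *: e) \/ (forall y, exists a b, y = a *: e + b *: u).
Proof.
move=> hd e0; case: (boolP (u \in <[e]>%VS)) => [/vlineP [l ->]|nu]; first by left; exists l.
right => y.
have hS : (<[e]> + <[u]> == fullv)%VS.
  rewrite eqEdim subvf /=.
  have h1 : (\dim <[e]> < \dim (<[e]> + <[u]>))%N.
    rewrite (ltn_leqif (dimv_leqif_sup (addvSl _ _))); apply: contra nu => /subvP; apply.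
    by apply/memv_addP; exists 0; [exact: mem0v | exists u; [exact: memv_line | by rewrite add0r]].
  by rewrite dim_vline e0 in h1; apply: leq_trans hd _.
have : y \in (<[e]> + <[u]>)%VS by rewrite (eqP hS) memvf.
by case/memv_addP => y1 /vlineP [a ->] [y2 /vlineP [b ->] ->]; exists a, b.
Qed.

Lemma span3 (F : fieldType) (V : vectType F) (e u : V) : (2 < \dim {:V})%N ->
  exists y, forall a b, y != a *: e + b *: u.
Proof.
move=> hd; case: (boolP (fullv <= <[e]> + <[u]>)%VS) => [hs|].
  have := dimvS hs; have := dimv_add_leqif <[e]> <[u]>; move=> [h _].
  move=> h2; have := leq_trans h2 h; rewrite !dim_vline.
  move=> h3; have h4 := leq_trans h3 (leq_add (leq_b1 (e != 0)) (leq_b1 (u != 0))).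
  by rewrite ltnNge h4 in hd.
case/subvPn => y _ ny; exists y => a b; apply: contra ny => /eqP ->.
by rewrite memv_add ?memvZ ?memv_line.
Qed.

Ltac lz E := apply/eqP; rewrite -subr_eq0; apply/eqP; transitivity E; [ring|].

Ltac toz h := move/eqP: h; rewrite -subr_eq0 => /eqP h.
Ltac lhs h := match type of h with ?l = _ => l end.
Ltac comb1 h1 c1 := toz h1; let E1 := lhs h1 in lz (c1 * E1); by rewrite h1 mulr0.
Ltac comb2 h1 h2 c1 c2 := toz h1; toz h2; let E1 := lhs h1 in let E2 := lhs h2 in
  lz (c1 * E1 + c2 * E2); by rewrite h1 h2 !mulr0 addr0.
Ltac comb3 h1 h2 h3 c1 c2 c3 := toz h1; toz h2; toz h3; let E1 := lhs h1 in let E2 := lhs h2 in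
  let E3 := lhs h3 in lz (c1 * E1 + c2 * E2 + c3 * E3); by rewrite h1 h2 h3 !mulr0 !addr0.

Section S.
Variables (F : fieldType) (V : vectType F) (mul : V -> V -> V) (e : V) (n : V -> F).
Local Notation "x ** y" := (mul x y) (at level 40, left associativity).
Hypotheses (mulL : forall a x y z, mul (a*:x+y) z = a*:mul x z + mul y z)
 (mulR : forall a x y z, mul z (a*:x+y) = a*:mul z x + mul z y)
 (unitL : forall x, e ** x = x) (unitR : forall x, x ** e = x)
 (nZ : forall a x, n (a*:x) = a^+2 * n x)
 (pL : forall a x y z, polar n (a*:x+y) z = a * polar n x z + polar n y z)
 (nondeg : forall x, (forall y, polar n x y = 0) -> x = 0) (comp : forall x y, n (x ** y) = n x * n y) (e0 : e != 0)
 (char0 : [pchar F] =i pred0).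
Lemma nz k : (k.+1)%:R != 0 :> F.
Proof. by rewrite ((pcharf0P F).1 char0). Qed.
Lemma two0 : (2:F) != 0. Proof. exact: nz. Qed.
Ltac lzf E := apply/eqP; rewrite -subr_eq0; apply/eqP; transitivity E; [field; by rewrite ?nz|].
Ltac comb1f h1 c1 := toz h1; let E1 := lhs h1 in lzf (c1 * E1); last by rewrite h1 mulr0.


Local Notation nn := (polar n).
Definition tr x := nn x e.
Definition cj x := tr x *: e - x.

Let hL z : forall a x y, (a *: x + y) ** z = a *: (x ** z) + y ** z := fun a x y => mulL a x y z.
Let hR z : forall a x y, z ** (a *: x + y) = a *: (z ** x) + z ** y := fun a x y => mulR a x y z.
Let hP z : forall a x y, nn (a *: x + y) z = a * nn x z + nn y z := fun a x y => pL a x y z.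
Lemma mDl x y z : (x + y) ** z = x ** z + y ** z. Proof. exact: (@lfD _ _ _ (fun t => t ** z) (hL z)). Qed.
Lemma mBl x y z : (x - y) ** z = x ** z - y ** z. Proof. exact: (@lfB _ _ _ (fun t => t ** z) (hL z)). Qed.
Lemma mNl x z : (- x) ** z = - (x ** z). Proof. exact: (@lfN _ _ _ (fun t => t ** z) (hL z)). Qed.
Lemma mZl a x z : (a *: x) ** z = a *: (x ** z). Proof. exact: (@lfZ _ _ _ (fun t => t ** z) (hL z)). Qed.
Lemma m0l z : 0 ** z = 0. Proof. exact: (@lf0 _ _ _ (fun t => t ** z) (hL z)). Qed.
Lemma mDr x y z : z ** (x + y) = z ** x + z ** y. Proof. exact: (@lfD _ _ _ (fun t => z ** t) (hR z)). Qed.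
Lemma mBr x y z : z ** (x - y) = z ** x - z ** y. Proof. exact: (@lfB _ _ _ (fun t => z ** t) (hR z)). Qed.
Lemma mNr x z : z ** (- x) = - (z ** x). Proof. exact: (@lfN _ _ _ (fun t => z ** t) (hR z)). Qed.
Lemma mZr a x z : z ** (a *: x) = a *: (z ** x). Proof. exact: (@lfZ _ _ _ (fun t => z ** t) (hR z)). Qed.
Lemma m0r z : z ** 0 = 0. Proof. exact: (@lf0 _ _ _ (fun t => z ** t) (hR z)). Qed.
Lemma nnC x y : nn x y = nn y x. Proof. by rewrite /polar (addrC x y); ring. Qed.
Lemma nnDl x y z : nn (x + y) z = nn x z + nn y z. Proof. exact: (@sfD _ _ (fun t => nn t z) (hP z)). Qed.
Lemma nnBl x y z : nn (x - y) z = nn x z - nn y z. Proof. exact: (@sfB _ _ (fun t => nn t z) (hP z)). Qed.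
Lemma nnNl x z : nn (- x) z = - nn x z. Proof. exact: (@sfN _ _ (fun t => nn t z) (hP z)). Qed.
Lemma nnZl a x z : nn (a *: x) z = a * nn x z. Proof. exact: (@sfZ _ _ (fun t => nn t z) (hP z)). Qed.
Lemma nn0l z : nn 0 z = 0. Proof. exact: (@sf0 _ _ (fun t => nn t z) (hP z)). Qed.
Lemma nnDr x y z : nn z (x + y) = nn z x + nn z y. Proof. by rewrite !(nnC z) nnDl. Qed.
Lemma nnBr x y z : nn z (x - y) = nn z x - nn z y. Proof. by rewrite !(nnC z) nnBl. Qed.
Lemma nnNr x z : nn z (- x) = - nn z x. Proof. by rewrite !(nnC z) nnNl. Qed.
Lemma nnZr a x z : nn z (a *: x) = a * nn z x. Proof. by rewrite !(nnC z) nnZl. Qed.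
Lemma nn0r z : nn z 0 = 0. Proof. by rewrite nnC nn0l. Qed.

Ltac nnx := repeat progress rewrite ?nnDl ?nnBl ?nnNl ?nnZl ?nn0l ?nnDr ?nnBr ?nnNr ?nnZr ?nn0r.

Lemma n0 : n 0 = 0. Proof. by have := nZ 0 0; rewrite scale0r expr2 !mul0r. Qed.
Lemma nsplit x y : n (x + y) = n x + n y + nn x y. Proof. rewrite /polar; ring. Qed.
Lemma nnxx x : nn x x = 2 * n x.
Proof. rewrite /polar; have -> : x + x = 2 *: x by rewrite scaler_nat mulr2n. by rewrite nZ; ring. Qed.

Lemma eq_nn x y : (forall w, nn x w = nn y w) -> x = y.
Proof. move=> h; apply/eqP; rewrite -subr_eq0; apply/eqP/nondeg => w; by rewrite nnBl h subrr. Qed.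

Lemma ne1 : n e = 1.
Proof.
have h := comp e e; rewrite unitL in h.
have : n e * (n e - 1) = 0 by rewrite mulrBr mulr1 -h subrr.
move/eqP; rewrite mulf_eq0 subr_eq0 => /orP [/eqP h0|/eqP //].
case/negP: e0; apply/eqP/nondeg => y.
have hz x : n x = 0 by rewrite -[x]unitL comp h0 mul0r.
by rewrite /polar !hz; ring.
Qed.

Lemma I3 p q w : nn (p ** q) (p ** w) = n p * nn q w.
Proof. rewrite /polar -mDr !comp; ring. Qed.
Lemma I4 p q w : nn (q ** p) (w ** p) = nn q w * n p.
Proof. rewrite /polar -mDl !comp; ring. Qed.
Lemma Dl p q r s : nn (p**q) (r**s) + nn (r**q) (p**s) = nn p r * nn q s.
Proof.
have h := I3 (p + r) q s; rewrite !mDl !nnDl !nnDr !I3 nsplit in h.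
comb1 h (1:F).
Qed.
Lemma Dr p q r s : nn (q**p) (s**r) + nn (q**r) (s**p) = nn p r * nn q s.
Proof.
have h := I4 (p + r) q s; rewrite !mDr !nnDl !nnDr !I4 nsplit in h.
comb1 h (1:F).
Qed.
Lemma nnee : nn e e = 2. Proof. by rewrite nnxx ne1 mulr1. Qed.
Lemma te : tr e = 2. Proof. exact: nnee. Qed.
Lemma I1 p q s : nn (p ** q) s = nn q (cj p ** s).
Proof.
have h := Dl p q e s; rewrite !unitL in h.
rewrite /cj mBl mZl unitL nnBr nnZr /tr; comb1 h (1:F).
Qed.
Lemma I2 p q s : nn (q ** p) s = nn q (s ** cj p).
Proof.
have h := Dr p q e s; rewrite !unitR in h.
rewrite /cj mBr mZr unitR nnBr nnZr /tr; comb1 h (1:F).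
Qed.
Lemma trcj p : tr (cj p) = tr p.
Proof. rewrite /cj /tr; nnx; rewrite nnee; ring. Qed.
Lemma cjK p : cj (cj p) = p.
Proof. apply: eq_nn => w; rewrite {1}/cj trcj /cj; nnx; ring. Qed.
Lemma LA p q : cj p ** (p ** q) = n p *: q.
Proof. apply: eq_nn => w; by rewrite I1 cjK I3 nnZl. Qed.
Lemma RA p q : (q ** p) ** cj p = n p *: q.
Proof. apply: eq_nn => w; by rewrite I2 cjK I4 nnZl mulrC. Qed.
Lemma LQ p q : p ** q + q ** p = tr p *: q + tr q *: p - nn p q *: e.
Proof.
apply: eq_nn => w.
have h1 := Dl p q e w; have h2 := Dl q p e w; have h3 := Dl p e q w.
rewrite !unitL !unitR in h1 h2 h3.
nnx; rewrite /tr. comb3 h1 h2 h3 (1:F) (1:F) (-1:F).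
Qed.
Lemma Qd p : p ** p = tr p *: p - n p *: e.
Proof.
apply: eq_nn => w.
have h1 := Dl p p e w; have h2 := I3 p e w.
rewrite !unitL !unitR in h1 h2.
nnx; rewrite /tr. comb2 h1 h2 (1:F) (-1:F).
Qed.

Lemma iso0 (hd : (\dim {:V} <= 2)%N) x : tr x = 0 -> n x = 0 -> x = 0.
Proof.
move=> t0 n0'; case: (@span2 _ _ e x hd e0) => [[l hl]|hs].
  have : l * l = 0 by rewrite -[l * l]mulr1 -ne1 -expr2 -nZ -hl.
  by move/eqP; rewrite mulf_eq0 orbb => /eqP l0; rewrite hl l0 scale0r.
apply: nondeg => y; case: (hs y) => c [d ->]; nnx; rewrite /tr in t0.
by rewrite t0 nnxx n0'; ring.
Qed.

Ltac mx := repeat progress rewrite ?mDl ?mBl ?mNl ?mZl ?m0l ?mDr ?mBr ?mNr ?mZr ?m0r.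
Ltac nnxin h := repeat progress rewrite ?nnDl ?nnBl ?nnNl ?nnZl ?nn0l ?nnDr ?nnBr ?nnNr ?nnZr ?nn0r in h.
Ltac sc h w := move: (congr1 (fun v => nn v w) h) => /=; clear h => h; nnx; nnxin h.

Section RBsec.
Variable R : V -> V.
Hypothesis Rlin : forall a x y, R (a *: x + y) = a *: R x + R y.
Hypothesis Rrb : forall x y, R x ** R y = R (R x ** y + x ** R y).
Lemma RD x y : R (x + y) = R x + R y. Proof. exact: (@lfD _ _ _ R Rlin). Qed.
Lemma RBs x y : R (x - y) = R x - R y. Proof. exact: (@lfB _ _ _ R Rlin). Qed.
Lemma RN x : R (- x) = - R x. Proof. exact: (@lfN _ _ _ R Rlin). Qed.
Lemma RZ a x : R (a *: x) = a *: R x. Proof. exact: (@lfZ _ _ _ R Rlin). Qed.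
Lemma R0 : R 0 = 0. Proof. exact: (@lf0 _ _ _ R Rlin). Qed.
Ltac Rx := repeat progress rewrite ?RD ?RBs ?RN ?RZ ?R0.
Ltac Rxin h := repeat progress rewrite ?RD ?RBs ?RN ?RZ ?R0 in h.

Lemma K x y : tr y *: R (R x) + tr x *: R (R y) - (nn (R x) y + nn x (R y)) *: R e
   + nn (R x) (R y) *: e = 0.
Proof.
have h1 := LQ (R x) (R y); rewrite !Rrb -RD in h1.
have h2 : (R x ** y + x ** R y) + (R y ** x + y ** R x) = tr (R x) *: y + tr y *: R x
   - nn (R x) y *: e + (tr x *: R y + tr (R y) *: x - nn x (R y) *: e).
  apply: eq_nn => w; have h3 := LQ (R x) y; have h4 := LQ x (R y).
  sc h3 w; sc h4 w; comb2 h3 h4 (1:F) (1:F).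
rewrite h2 in h1; Rxin h1.
apply: nondeg => w; sc h1 w; rewrite /tr in h1 *; comb1 h1 (1:F).
Qed.

Lemma RaE : R (R e) = (tr (R e) / 2) *: R e - (n (R e) / 2) *: e.
Proof.
apply: eq_nn => w; have h := K e e; sc h w; rewrite te nnxx (nnC e) in h; nnx.
rewrite /tr in h *; comb1f h (1/4:F).
Qed.

Lemma tn0 : tr (R e) = 0 /\ n (R e) = 0.
Proof.
have h := K (R e) (R e).
rewrite RaE in h; Rxin h; rewrite RaE in h.
have h' := h; sc h e; sc h' (R e).
rewrite /tr nnee !nnxx (nnC e) in h h'.
set t := nn (R e) e in h h'; set m := n (R e) in h h'.
have e1 : t^+4 - 6 * t^+2 * m + 2 * m^+2 = 0 by comb1f h (2:F).
have e2 : t * m * (t^+2 - 7 * m) = 0 by comb1f h' (2:F).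
have sq (x : F) : x * x = 0 -> x = 0 by move/eqP; rewrite mulf_eq0 orbb => /eqP.
have k2 (x : F) : 2 * x = 0 -> x = 0 by move/eqP; rewrite mulf_eq0 (negPf two0) => /eqP.
have k9 (x : F) : 9 * x = 0 -> x = 0 by move/eqP; rewrite mulf_eq0 (negPf (nz 8)) => /eqP.
suff : t = 0 /\ m = 0 by [].
move/eqP: e2; rewrite !mulf_eq0 => /orP[/orP[/eqP t0|/eqP m0]|].
- have m0 : m = 0 by apply: (sq); apply: (k2); rewrite -e1 t0; ring.
  by [].
- have t0 : t = 0 by apply: (sq); apply: (sq); rewrite -e1 m0; ring.
  by [].
- rewrite subr_eq0 => /eqP d.
  have t4 : t^+4 = t^+2 * t^+2 by ring.
  have m0 : m = 0 by apply: (sq); apply: (k9); rewrite -e1 t4 d; ring.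
  split => //; apply: (sq); by rewrite -expr2 d m0 mulr0.
Qed.

Lemma Ra0 : R (R e) = 0.
Proof. by rewrite RaE (proj1 tn0) (proj2 tn0) !mul0r !scale0r subrr. Qed.
Lemma E2 y w : nn (R y) (R e) * nn (R e) w = 0.
Proof.
have h := K y (R e); rewrite Ra0 R0 (proj1 tn0) in h; sc h w.
rewrite /tr in h; nnxin h; rewrite ?nn0r ?nn0l in h; comb1 h (-1:F).
Qed.
Lemma R3 y : R (R (R y)) = 0.
Proof.
have h := K y e; move: (congr1 R h) => {h} h; rewrite R0 in h; Rxin h.
rewrite Ra0 R0 in h.
apply: nondeg => w; sc h w; have e2 := E2 y w.
rewrite te in h.
have : 2 * nn (R (R (R y))) w = 0 by comb2 h e2 (1:F) (-1:F).
by move/eqP; rewrite mulf_eq0 (negPf two0) => /eqP.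
Qed.

Lemma R2z (a0 : R e = 0) y : R (R y) = 0.
Proof.
have h := K y e; rewrite a0 R0 in h; apply: nondeg => w; sc h w; rewrite te in h.
have : 2 * nn (R (R y)) w = 0 by comb1 h (1:F).
by move/eqP; rewrite mulf_eq0 (negPf two0) => /eqP.
Qed.
Lemma nRy0 (a0 : R e = 0) y : n (R y) = 0.
Proof.
have h := K y y; rewrite a0 (R2z a0) in h; sc h e; rewrite nnxx nnee in h.
have : 4 * n (R y) = 0 by comb1 h (1:F).
by move/eqP; rewrite mulf_eq0 (negPf (nz 3)) => /eqP.
Qed.
Lemma div0 (nd : forall x, n x = 0 -> x = 0) y : R y = 0.
Proof. exact: nd _ (nRy0 (nd _ (proj2 tn0)) y). Qed.
Lemma dim2z (hd : (\dim {:V} <= 2)%N) y : R y = 0.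
Proof.
have a0 : R e = 0 by apply: (iso0 hd); [exact: (proj1 tn0)|exact: (proj2 tn0)].
case: (@span2 _ _ e (R y) hd e0) => [[l hl]|hs].
  have : l * l = 0 by rewrite -[l * l]mulr1 -ne1 -expr2 -nZ -hl nRy0.
  by move/eqP; rewrite mulf_eq0 orbb => /eqP l0; rewrite hl l0 scale0r.
case: (hs y) => c [d hy]; rewrite {1}hy; Rx; by rewrite a0 R2z // !scaler0 addr0.
Qed.
End RBsec.

Section Constr.
Variables u a ub : V.
Hypotheses (hub : ub = e - u) (hu : u ** u = u) (tu : tr u = 1) (hua : u ** a = a)
  (hau : a ** u = 0) (a0 : a != 0).

Lemma nu0 : n u = 0.
Proof.
have h := Qd u; rewrite hu tu scale1r in h; sc h e; rewrite nnee in h.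
have : 2 * n u = 0 by comb1 h (1:F).
by move/eqP; rewrite mulf_eq0 (negPf two0) => /eqP.
Qed.
Lemma na0 : n a = 0. Proof. by rewrite -hua comp nu0 mul0r. Qed.
Lemma cju : cj u = ub. Proof. by rewrite /cj tu scale1r hub. Qed.
Lemma uba : ub ** a = 0. Proof. by rewrite hub mBl unitL hua subrr. Qed.
Lemma aub : a ** ub = a. Proof. by rewrite hub mBr unitR hau subr0. Qed.
Lemma ubub : ub ** ub = ub. Proof. by rewrite hub mBl !mBr !unitL !unitR hu subrr subr0. Qed.
Lemma nua : nn u a = 0.
Proof. by rewrite -{1}(unitR u) I1 cju uba nn0r. Qed.
Lemma ta0 : tr a = 0.
Proof.
have h := LQ u a; rewrite hua hau addr0 in h; sc h e; rewrite nua tu in h.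
have tu' : nn u e = 1 := tu. rewrite /tr in h *; rewrite tu' in h; comb1 h (-1:F).
Qed.
Lemma cja : cj a = - a. Proof. by rewrite /cj ta0 scale0r sub0r. Qed.
Lemma aa : a ** a = 0. Proof. by rewrite Qd ta0 na0 !scale0r subrr. Qed.
Lemma f1 y : nn (u ** y) a = 0. Proof. by rewrite I1 cju uba nn0r. Qed.
Lemma f2 y : nn (a ** y) a = 0. Proof. by rewrite -{2}(unitR a) I3 na0 mul0r. Qed.
Lemma f3 x : nn (x ** u) a = nn x a. Proof. by rewrite I2 cju aub. Qed.
Lemma f4 x : nn (x ** a) a = 0. Proof. by rewrite -{2}(unitL a) I4 na0 mulr0. Qed.
Lemma f5 y : nn (u ** y) ub = nn y ub. Proof. by rewrite I1 cju ubub. Qed.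
Lemma f6 y : nn (a ** y) ub = - nn y a. Proof. by rewrite I1 cja mNl aub nnNr. Qed.
Lemma f7 x : nn (x ** u) ub = nn x ub. Proof. by rewrite I2 cju ubub. Qed.
Lemma f8 x : nn (x ** a) ub = 0. Proof. by rewrite I2 cja mNr uba oppr0 nn0r. Qed.

Definition Rc x := nn x a *: u + nn x ub *: a.
Lemma Rc_lin : forall c x y, Rc (c *: x + y) = c *: Rc x + Rc y.
Proof. move=> c x y; apply: eq_nn => w; rewrite /Rc; nnx; ring. Qed.
Lemma Rc_rb x y : Rc x ** Rc y = Rc (Rc x ** y + x ** Rc y).
Proof.
apply: eq_nn => w; rewrite /Rc; mx; rewrite hu hua hau aa.
nnx; rewrite ?f1 ?f2 ?f3 ?f4 ?f5 ?f6 ?f7 ?f8; ring.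
Qed.
Lemma Rc2 y : Rc (Rc y) = nn y a *: a.
Proof.
apply: eq_nn => w; rewrite /Rc; nnx.
have h1 : nn u ub = 1 by rewrite hub nnBr nnxx nu0 -/(tr u) tu; ring.
have h2 : nn a ub = 0 by rewrite hub nnBr -/(tr a) ta0 nnC nua; ring.
rewrite nua h1 h2 nnxx na0; ring.
Qed.
End Constr.

Lemma exists_nn x : x != 0 -> exists y, nn x y != 0.
Proof.
move=> x0; case: (classic (exists y, nn x y != 0)) => // H; exfalso.
move/negP: x0; apply; apply/eqP/nondeg => y; case: (eqVneq (nn x y) 0) => // hy; exfalso; apply: H; by exists y.
Qed.

Lemma construct (hs : split_norm n) (hd : (2 < \dim {:V})%N) :
  exists R : V -> V, (forall c x y, R (c*:x+y) = c*:R x + R y) /\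
    (forall x y, R x ** R y = R (R x ** y + x ** R y)) /\ exists y, R (R y) != 0.
Proof.
case: hs => x x0 nx0; case: (exists_nn x0) => y cy.
pose u := (nn x y)^-1 *: (x ** cj y).
have tu : tr u = 1 by rewrite /u /tr nnZl I2 cjK unitL mulVf.
have tu' : nn u e = 1 := tu.
have nu : n u = 0 by rewrite /u nZ comp nx0 !mul0r mulr0.
have hu : u ** u = u by rewrite Qd tu nu scale1r scale0r subr0.
clearbody u.
case: (span3 e u hd) => y0 hy0.
pose z := y0 - nn y0 u *: e - (nn y0 e - 2 * nn y0 u) *: u.
have z0 : z != 0.
  apply: contra (hy0 (nn y0 u) (nn y0 e - 2 * nn y0 u)) => /eqP hz; apply/eqP.
  apply: eq_nn => w; sc hz w; comb1 hz (1:F).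
have ze : nn z e = 0 by rewrite /z; nnx; rewrite nnee tu'; ring.
have zu : nn z u = 0 by rewrite /z; nnx; rewrite nnxx nu (nnC e u) tu'; ring.
have lq : u ** z + z ** u = z.
  by rewrite LQ tu (_ : tr z = 0) // nnC zu scale1r !scale0r addr0 subr0.
have cju : cj u = e - u by rewrite /cj tu scale1r.
case: (eqVneq (u ** z) 0) => uz.
  have zu' : z ** u = z by move: lq; rewrite uz add0r.
  have hub : u = e - (e - u) by rewrite opprB addrC subrK.
  have hu2 : (e - u) ** (e - u) = e - u.
    by rewrite mBl !mBr !unitL !unitR hu subrr subr0.
  have tu2 : tr (e - u) = 1 by rewrite /tr nnBl nnee tu'; ring.
  have hua : (e - u) ** z = z by rewrite mBl unitL uz subr0.
  have hau : z ** (e - u) = 0 by rewrite mBr unitR zu' subrr.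
  exists (Rc (e - u) z u); split; first exact: Rc_lin.
  split; first by move=> x1 y1; apply: Rc_rb.
  case: (exists_nn z0) => y1 hy1; exists y1; rewrite (Rc2 hub hu2 tu2 hua hau) //.
  by rewrite scaler_eq0 negb_or nnC hy1.
have hua : u ** (u ** z) = u ** z.
  have h := LA u z; rewrite cju nu scale0r mBl unitL in h.
  by move/eqP: h; rewrite subr_eq0 eq_sym => /eqP.
have hau : (u ** z) ** u = 0.
  have h := RA u z; rewrite cju nu scale0r mBr unitR in h.
  have uz' : u ** z = z - z ** u by rewrite -{2}lq addrK.
  by rewrite uz' mBl h.
have hub : e - u = e - u by [].
exists (Rc u (u ** z) (e - u)); split; first exact: Rc_lin.
split; first by move=> x1 y1; apply: Rc_rb.
case: (exists_nn uz) => y1 hy1; exists y1; rewrite (Rc2 hub hu tu hua hau) //.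
by rewrite scaler_eq0 negb_or nnC hy1.
Qed.

Lemma zero_rb : rota_baxter0 mul (fun _ => 0).
Proof. split; first by move=> *; rewrite scaler0 addr0. by move=> *; rewrite m0l. Qed.

Lemma final_thm : ((~ split_norm n \/ (\dim {:V} <= 2)%N) -> rb_index mul 1) /\
  (split_norm n /\ (\dim {:V} = 4 \/ \dim {:V} = 8)%N -> rb_index mul 3).
Proof.
split.
  move=> hc; split.
    move=> R [Rl Rr] x /=; case: hc => [ns|hd]; last exact: (dim2z Rl Rr hd).
    apply: (div0 Rl Rr) => x0 nx0; case: (eqVneq x0 0) => // h; exfalso; apply: ns; by exists x0.
  case=> [|m] // h; exfalso; move/negP: e0; apply; apply/eqP; exact: (h _ zero_rb e).
case=> hs hd; have hd3 : (2 < \dim {:V})%N by case: hd => ->.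
split.
  move=> R [Rl Rr] x /=; exact: (R3 Rl Rr).
move=> m h; case: (construct hs hd3) => R [Rl [Rr [y ny]]].
rewrite leqNgt; apply/negP => hm.
have it0 k : iter k R 0 = 0 by elim: k => //= k ->; exact: (R0 Rl).
have hRm := h R (conj Rl Rr) y.
move/negP: ny; apply; apply/eqP.
have -> : R (R y) = iter 2 R y by [].
by rewrite -(subnK (_ : m <= 2)%N) // iterD hRm it0.
Qed.
End S.
Unset Implicit Arguments. Set Strict Implicit.
Theorem mainTheorem20 (F : fieldType) (charF0 : [pchar F] =i pred0)
  (V : vectType F) (mul : V -> V -> V) (e : V) (n : V -> F)
  (HC : unital_composition_algebra mul e n) :
  ((~ split_norm n \/ (\dim {: V} <= 2)%N) -> rb_index mul 1) /\
  (split_norm n /\ (\dim {: V} = 4 \/ \dim {: V} = 8)%N -> rb_index mul 3).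
Proof.
case: HC => e0 [[mL mR] hunit [nZ pL] nd comp].
exact: (@final_thm F V mul e n mL mR (fun x => (hunit x).1) (fun x => (hunit x).2) nZ pL nd comp e0 charF0).
Qed.
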